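(* Let $\Gamma$ be a finitely generated semigroup with identity $e$ and $\rho:\Gamma\to\mathrm{End}(G)$ an endomorphism action with $\rho(e)=\mathrm{Id}$ on a solenoid $G$. Then every $\rho$-basis of $\widehat G$ is $k$-regular for some positive integer $k$.
   Context: A solenoid is a compact connected finite-dimensional metrizable abelian group (dual $\widehat G$ torsion-free of finite rank). $\widehat\rho(\gamma)(\chi)=\chi\circ\rho(\gamma)$. A $\rho$-basis is a set $A\subset\widehat G$ generating $\widehat G$ as an abelian group with $A=\bigcup_{\gamma}\widehat\rho(\gamma)(F)$ for some finite $F\subset\widehat G$. For a discrete abelian group $H$ (written additively), a subset $B\subset H$ and $k>0$, $\mathbf Q_k(B)$ is the set of $h\in H$ satisfying an equation $n_0h=\sum_{j=1}^r n_ja_j$ with $a_1,\dots,a_r\in B$, integers $n_0\ne 0,n_1,\dots,n_r$, and $|n_0|+|n_1|+\cdots+|n_r|\le k$. A set $A\subset H$ is $k$-regular if there is an increasing sequence of finite sets $A_1\subset A_2\subset\cdots\subset A$ with $\bigcup_i A_i=A$ and $A_n\subset\mathbf Q_k(A_{n-1})$ for all $n\ge2$. *)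

(* Defs.v *)
From HB Require Import structures.
From mathcomp Require Import all_boot all_order all_algebra.
From mathcomp Require Import all_classical all_reals all_analysis.
From Stdlib Require List.
Set Implicit Arguments. Unset Strict Implicit. Unset Printing Implicit Defensive.
Import Order.TTheory GRing.Theory Num.Theory.
Import numFieldTopology.Exports numFieldNormedType.Exports.
Local Open Scope classical_set_scope.
Local Open Scope ring_scope.

(* Points of the circle are represented as pairs (re, im) in R * R with the
   product topology (= subspace topology of C); the group law is complex
   multiplication. *)
Section Circle.
Variable R : realType.

Definition cmul (z w : R * R) : R * R :=
  (z.1 * w.1 - z.2 * w.2, z.1 * w.2 + z.2 * w.1).
Definition cone : R * R := (1, 0).
Definition cconj (z : R * R) : R * R := (z.1, - z.2).
Definition cpow (z : R * R) (n : int) : R * R :=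
  match n with
  | Posz m => iter m (cmul z) cone
  | Negz m => iter m.+1 (cmul (cconj z)) cone
  end.
End Circle.

Definition metrizable (R : realType) (T : topologicalType) : Prop :=
  exists d : T -> T -> R,
    [/\ forall x y, 0 <= d x y,
        forall x y, d x y = 0 <-> x = y,
        forall x y, d x y = d y x,
        forall x y z, d x z <= d x y + d y z &
        forall (x : T) (U : set T),
          nbhs x U <-> exists2 e : R, 0 < e & [set y | d x y < e] `<=` U].

Section Dual.
Variables (R : realType) (G : topologicalZmodType).

(* continuous characters G -> T ; the dual group \hat G is the set of them,
   with pointwise multiplication (written additively in the paper) *)
Definition is_character (chi : G -> R * R) : Prop :=
  [/\ continuous chi,
      forall x, (chi x).1 ^+ 2 + (chi x).2 ^+ 2 = 1 &
      forall x y, chi (x + y) = cmul (chi x) (chi y)].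

Definition dual : set (G -> R * R) := [set chi | is_character chi].

(* the element  n_1 a_1 + ... + n_r a_r  of \hat G (pointwise, multiplicatively) *)
Definition zlin (s : seq ((G -> R * R) * int)) : G -> R * R :=
  fun x => foldr (fun p acc => cmul (cpow (p.1 x) p.2) acc) (cone R) s.

Definition Qk (k : nat) (B : set (G -> R * R)) : set (G -> R * R) :=
  [set h | exists (n0 : int) (s : seq ((G -> R * R) * int)),
     [/\ n0 != 0,
         List.Forall (fun p => B p.1) s,
         (`|n0|%N + sumn [seq `|p.2|%N | p <- s] <= k)%N &
         forall x, cpow (h x) n0 = zlin s x]].

Definition k_regular (k : nat) (A : set (G -> R * R)) : Prop :=
  exists An : nat -> set (G -> R * R),
    [/\ forall n, finite_set (An n),
        forall n, An n `<=` An n.+1,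
        forall n, An n `<=` A,
        \bigcup_n An n = A &
        forall n, An n.+1 `<=` Qk k (An n)].

Definition generates_dual (A : set (G -> R * R)) : Prop :=
  forall chi, dual chi -> exists s : seq ((G -> R * R) * int),
    List.Forall (fun p => A p.1) s /\ chi = zlin s.

Definition zindep (s : seq (G -> R * R)) : Prop :=
  forall ns : seq int, size ns = size s ->
    zlin (zip s ns) = (fun _ => cone R) -> all (fun n => n == 0) ns.

Definition dual_torsion_free : Prop :=
  forall chi (n : int), dual chi -> n != 0 ->
    (fun x => cpow (chi x) n) = (fun _ => cone R) -> chi = (fun _ => cone R).

Definition dual_finite_rank : Prop :=
  exists N : nat, forall s : seq (G -> R * R),
    List.Forall dual s -> zindep s -> (size s <= N)%N.

(* solenoid: compact connected finite-dimensional metrizable abelian group,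
   i.e. dual torsion-free of finite rank *)
Definition solenoid : Prop :=
  [/\ compact [set: G], connected [set: G], @metrizable R G,
      dual_torsion_free & dual_finite_rank].

Definition endo (f : G -> G) : Prop :=
  continuous f /\ forall x y, f (x + y) = f x + f y.
End Dual.

Inductive gen_by (S : Type) (op : S -> S -> S) (g : seq S) : S -> Prop :=
  | gen_base s : List.In s g -> gen_by op g s
  | gen_op a b : gen_by op g a -> gen_by op g b -> gen_by op g (op a b).

Definition semigroup_with_identity (S : Type) (op : S -> S -> S) (e : S) :=
  (forall a b c, op a (op b c) = op (op a b) c) /\
  (forall a, op e a = a /\ op a e = a).

Definition finitely_generated (S : Type) (op : S -> S -> S) :=
  exists g : seq S, forall s, gen_by op g s.

Definition rho_basis (R : realType) (G : topologicalZmodType) (S : Type)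
  (rho : S -> G -> G) (A : set (G -> R * R)) : Prop :=
  A `<=` @dual R G /\ @generates_dual R G A /\
  exists F : seq (G -> R * R), List.Forall (@dual R G) F /\
    A = [set chi | exists gamma, exists2 f, List.In f F & chi = f \o rho gamma].

(* Main.v *)
Require Import Defs.
From HB Require Import structures.
From mathcomp Require Import all_boot all_order all_algebra.
From mathcomp Require Import all_classical all_reals all_analysis.
From mathcomp Require Import ring zify.
From Stdlib Require Import Classical.
From Stdlib Require List.
Set Implicit Arguments. Unset Strict Implicit. Unset Printing Implicit Defensive.
Import Order.TTheory GRing.Theory Num.Theory.
Local Open Scope classical_set_scope.
Local Open Scope ring_scope.

Section CircleLemmas.
Variable R : realType.
Implicit Types a b c w z : R * R.

Lemma cmulA a b c : cmul a (cmul b c) = cmul (cmul a b) c.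
Proof. case: a b c => [a1 a2] [b1 b2] [c1 c2]; rewrite /cmul /=; congr pair; ring. Qed.

Lemma cmul1z a : cmul (cone R) a = a.
Proof. case: a => [a1 a2]; rewrite /cmul /=; congr pair; ring. Qed.

Lemma cmulz1 a : cmul a (cone R) = a.
Proof. case: a => [a1 a2]; rewrite /cmul /=; congr pair; ring. Qed.

Lemma cmul4 w a z b : cmul (cmul w a) (cmul z b) = cmul (cmul w z) (cmul a b).
Proof. case: w a z b => [w1 w2] [a1 a2] [z1 z2] [b1 b2]; rewrite /cmul /=; congr pair; ring. Qed.

Lemma iter_inv m w z : cmul w z = cone R ->
  cmul (iter m (cmul w) (cone R)) (iter m (cmul z) (cone R)) = cone R.
Proof.
move=> H; elim: m => [|m IH] /=; first by rewrite cmulz1.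
by rewrite cmul4 H IH cmulz1.
Qed.

Lemma conj_r z : z.1 ^+ 2 + z.2 ^+ 2 = 1 -> cmul z (cconj z) = cone R.
Proof.
case: z => [a1 a2] /= H; rewrite /cmul /cconj /cone /=; congr pair; last by ring.
by rewrite -H; ring.
Qed.

Lemma conj_l z : z.1 ^+ 2 + z.2 ^+ 2 = 1 -> cmul (cconj z) z = cone R.
Proof.
case: z => [a1 a2] /= H; rewrite /cmul /cconj /cone /=; congr pair; last by ring.
by rewrite -H; ring.
Qed.

Lemma cpow_inv z (n : int) : z.1 ^+ 2 + z.2 ^+ 2 = 1 ->
  cmul (cpow z (- n)) (cpow z n) = cone R.
Proof.
move=> H; case: n => [[|m]|m].
- by rewrite oppr0 /= cmulz1.
- have -> : - (Posz m.+1) = Negz m by [].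
  by rewrite /cpow; apply: iter_inv; apply: conj_l.
- have -> : - (Negz m) = Posz m.+1 by [].
  by rewrite /cpow; apply: iter_inv; apply: conj_r.
Qed.

Lemma cpow0 z : cpow z 0 = cone R. Proof. by []. Qed.
Lemma cpow1 z : cpow z (Posz 1) = z. Proof. by rewrite /= cmulz1. Qed.
End CircleLemmas.

Lemma finite_list T (l : list T) : finite_set [set x | List.In x l].
Proof.
elim: l => [|x l IH].
  by have -> : [set x : T | List.In x nil] = set0 by apply/seteqP; split => y //=.
have -> : [set y : T | List.In y (x :: l)] = [set x] `|` [set y | List.In y l].
  apply/seteqP; split => y /=; first by case=> [->|H]; [left|right].
  by case=> [->|H]; [left|right].
by rewrite finite_setU; split=> //; apply: finite_set1.
Qed.

Definition ev S (op : S -> S -> S) (e : S) (w : seq S) : S := foldr op e w.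
Definition wg S (g : seq S) (w : seq S) : Prop := List.Forall (fun x => List.In x g) w.

Lemma wg_cat S (g l1 l2 : seq S) : wg g (l1 ++ l2) <-> wg g l1 /\ wg g l2.
Proof.
elim: l1 => [|x l IH] /=; first by split=> [H|[]//]; split=> //; constructor.
split.
  move/List.Forall_cons_iff=> [Hx H]; have [? ?] := (proj1 IH H); split=> //; by constructor.
move=> [/List.Forall_cons_iff [Hx H1] H2]; constructor=> //; exact: (proj2 IH).
Qed.

Lemma ev_cat S (op : S -> S -> S) e (l1 l2 : seq S) :
  semigroup_with_identity op e -> ev op e (l1 ++ l2) = op (ev op e l1) (ev op e l2).
Proof.
move=> [opA opid]; elim: l1 => [|x l IH] /=; first by rewrite (proj1 (opid _)).
by rewrite /ev /= -/(ev op e _) IH opA.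
Qed.

Lemma gen_ev S (op : S -> S -> S) e g s :
  semigroup_with_identity op e -> gen_by op g s -> exists w, wg g w /\ s = ev op e w.
Proof.
move=> Hs; elim=> [x Hx|a b _ [wa [Ha ->]] _ [wb [Hb ->]]].
  exists [:: x]; split; first by constructor=> //; constructor.
  by rewrite /ev /= (proj2 (proj2 Hs x)).
exists (wa ++ wb); split; first by apply/wg_cat.
by rewrite ev_cat.
Qed.

Fixpoint allw S (g : seq S) (L : nat) : list (seq S) :=
  match L with
  | 0 => [:: [::]]
  | L'.+1 => [::] :: List.flat_map (fun x => List.map (cons x) (allw g L')) g
  end.

Lemma allwP S (g : seq S) L w : wg g w -> (size w <= L)%N -> List.In w (allw g L).
Proof.
elim: L w => [|L IH] [|x w] //= Hw Hs; try by left.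
move/List.Forall_cons_iff: Hw => [Hx Hw2].
right; apply/List.in_flat_map; exists x; split=> //.
by apply/List.in_map; apply: IH.
Qed.

Lemma bound_list T (l : list T) (P : T -> nat -> Prop) :
  (forall y, List.In y l -> exists n, P y n) ->
  exists K, forall y, List.In y l -> exists n, (n <= K)%N /\ P y n.
Proof.
elim: l => [|x l IH] H; first by exists 0%N.
have [n Hn] := H x (or_introl erefl).
have [K HK] := IH (fun y Hy => H y (or_intror Hy)).
exists (maxn n K) => y [<-|Hy]; first by exists n; rewrite leq_maxl.
have [m [Hm Pm]] := HK y Hy; exists m; split=> //; exact: leq_trans Hm (leq_maxr _ _).
Qed.

Lemma Forall_map_seq A B (P : A -> Prop) (Q : B -> Prop) (f : A -> B) (t : seq A) :
  List.Forall P t -> (forall a, P a -> Q (f a)) -> List.Forall Q (map f t).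
Proof. move=> H Hf; elim: H => [|a l Pa _ IH] /=; constructor; auto. Qed.

Lemma Forall_zip_fst_gen A B (s0 s : seq A) (ns : seq B) :
  (forall y, List.In y s -> List.In y s0) ->
  List.Forall (fun p => List.In p.1 s0) (zip s ns).
Proof.
elim: s ns => [|x s IH] [|n ns] /= H; try constructor.
  by apply: H; left.
by apply: IH => y Hy; apply: H; right.
Qed.

Lemma Forall_zip_fst A B (s : seq A) (ns : seq B) :
  List.Forall (fun p => List.In p.1 s) (zip s ns).
Proof. exact: Forall_zip_fst_gen. Qed.

Lemma zlin_comp (R : realType) (G : topologicalZmodType) (phi : G -> G)
  (t : seq ((G -> R * R) * int)) x :
  zlin (map (fun p => (p.1 \o phi, p.2)) t) x = zlin t (phi x).
Proof. by elim: t => [|p t IH] //=; rewrite /zlin /= -!/(zlin _ _) IH. Qed.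

Lemma maxind (R : realType) (G : topologicalZmodType) (A : set (G -> R * R)) N :
  (forall s, List.Forall (@dual R G) s -> zindep s -> (size s <= N)%N) ->
  A `<=` @dual R G ->
  forall d s, (N - size s <= d)%N -> List.Forall A s -> zindep s ->
  exists s', List.Forall A s' /\ zindep s' /\ forall h, A h -> ~ zindep (h :: s').
Proof.
move=> HN AD d; elim: d => [|d IH] s Hd As Is;
  (case: (classic (exists h, A h /\ zindep (h :: s))) => [[h [Ah Ih]]|Hno];
   last by exists s; split=> //; split=> // h Ah Ih; apply: Hno; exists h).
- have : (size (h :: s) <= N)%N.
    apply: HN Ih; constructor; first exact: AD.
    by apply: List.Forall_impl As => a; apply: AD.
  by rewrite /=; lia.
- apply: (IH (h :: s)) => //=; [lia | by constructor].
Qed.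

Lemma rep (R : realType) (G : topologicalZmodType) (A : set (G -> R * R)) s :
  A `<=` @dual R G -> zindep s -> (forall h, A h -> ~ zindep (h :: s)) ->
  forall h, A h -> exists (m : int) (t : seq ((G -> R * R) * int)),
    [/\ m != 0, List.Forall (fun p => List.In p.1 s) t &
        forall x, cpow (h x) m = zlin t x].
Proof.
move=> AD Is Hmax h Ah.
have [ns Hns] := not_all_ex_not _ _ (Hmax h Ah).
have [Hsz Hns2] := imply_to_and _ _ Hns.
have [Hz Hnz] := imply_to_and _ _ Hns2.
clear Hns Hns2; case: ns Hsz Hz Hnz => [//|n0 ns] /= /eqP; rewrite eqSS => /eqP Hsz Hz Hnz.
have Hx x : cmul (cpow (h x) n0) (zlin (zip s ns) x) = cone R := congr1 (fun f => f x) Hz.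
case: (eqVneq n0 0) => [n00|n0nz].
  exfalso; apply: Hnz; rewrite n00 /=.
  apply: Is Hsz _; apply/funext => x.
  by rewrite -(Hx x) n00 cpow0 cmul1z.
exists (- n0), (zip s ns); split; [by rewrite oppr_eq0 | exact: Forall_zip_fst | ].
move=> x; have [_ Hc _] := AD h Ah; have Hinv := cpow_inv n0 (Hc x).
by rewrite -[cpow _ (- n0)]cmulz1 -(Hx x) cmulA Hinv cmul1z.
Qed.

Theorem proposition4p8 (R : realType) (G : topologicalZmodType)
  (S : Type) (op : S -> S -> S) (e : S) (rho : S -> G -> G) :
  semigroup_with_identity op e ->
  finitely_generated op ->
  solenoid R G ->
  (forall gamma, endo (rho gamma)) ->
  (forall a b, rho (op a b) = rho a \o rho b) ->
  rho e = id ->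
  forall A : set (G -> R * R), rho_basis rho A ->
  exists k : nat, (0 < k)%N /\ k_regular k A.
Proof.
move=> Hsg [g gen] [_ _ _ _ [N HN]] _ Hrho He A [AD [_ [F [FD HA]]]].
have rho_cat l1 l2 : rho (ev op e (l1 ++ l2)) = rho (ev op e l1) \o rho (ev op e l2).
  by rewrite ev_cat // Hrho.
have HAin f w : List.In f F -> A (f \o rho (ev op e w)).
  by move=> Ff; rewrite HA; exists (ev op e w), f.
have HAout y : A y -> exists f w, [/\ List.In f F, wg g w & y = f \o rho (ev op e w)].
  rewrite HA => -[gamma [f Ff ->]].
  have [w [Hw ->]] := gen_ev Hsg (gen gamma).
  by exists f, w.
have Z0 : zindep (R:=R) (G:=G) [::] by case.
have [s [sA [sind smax]]] := maxind HN AD (d := (N - 0)%N) (s := [::]) (leqnn _)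
  (List.Forall_nil _) Z0.
have Hrep := rep AD sind smax.
have [c Hc] : exists c, forall y, List.In y s -> exists f w,
    [/\ List.In f F, wg g w, (size w <= c)%N & y = f \o rho (ev op e w)].
  elim: s sA {sind smax Hrep} => [|y s IH] Hs; first by exists 0%N.
  move/List.Forall_cons_iff: Hs => [Ay Hs].
  have [c IHc] := IH Hs.
  have [f [w [Ff Hw Hy]]] := HAout y Ay.
  exists (maxn (size w) c) => z [<-|Hz].
    by exists f, w; split=> //; rewrite leq_maxl.
  have [f' [w' [Ff' Hw' Hs' ->]]] := IHc z Hz.
  exists f', w'; split=> //; exact: leq_trans Hs' (leq_maxr _ _).
pose Y := List.flat_map (fun f => List.map (fun p => f \o rho (ev op e p)) (allw g c.+1)) F.
pose P := (fun (y : G -> R * R) (n : nat) => exists (m : int) (t : seq ((G -> R * R) * int)),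
    [/\ m != 0, List.Forall (fun p => List.In p.1 s) t,
        forall x, cpow (y x) m = zlin t x &
        (`|m|%N + sumn [seq `|p.2|%N | p <- t] <= n)%N]).
have HY : forall y, List.In y Y -> exists n, P y n.
  move=> y /List.in_flat_map [f [Ff /List.in_map_iff [p [<- _]]]].
  have [m [t [Hm Ht Heq]]] := Hrep _ (HAin f p Ff).
  by exists (`|m|%N + sumn [seq `|p.2|%N | p <- t])%N, m, t.
have [K HK] := @bound_list _ Y P HY.
pose An n := [set x | exists f w,
  [/\ List.In f F, wg g w, (size w <= n + c)%N & x = f \o rho (ev op e w)]].
exists (maxn 2 K); split; first by rewrite leq_max.
exists An; split.
- move=> n; apply: (sub_finite_set _ (finite_list
    (List.flat_map (fun f => List.map (fun w => f \o rho (ev op e w)) (allw g (n + c))) F))).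
  move=> x [f [w [Ff Hw Hs ->]]] /=.
  apply/List.in_flat_map; exists f; split=> //; apply/List.in_map_iff.
  by exists w; split=> //; apply: allwP.
- move=> n x [f [w [Ff Hw Hs ->]]]; exists f, w; split=> //; exact: leq_trans Hs (leqnSn _).
- by move=> n x [f [w [Ff Hw Hs ->]]]; apply: HAin.
- apply/seteqP; split; first by move=> x [n _ [f [w [Ff Hw Hs ->]]]]; apply: HAin.
  move=> x /HAout [f [w [Ff Hw ->]]]; exists (size w) => //.
  by exists f, w; split=> //; rewrite leq_addr.
- move=> n x [f [w [Ff Hw Hs ->]]].
  case: (leqP (size w) (n + c)) => hs.
    exists (Posz 1), [:: (f \o rho (ev op e w), Posz 1)]; split=> //.
    + apply: List.Forall_cons; last exact: List.Forall_nil.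
      by rewrite /An /=; exists f, w.
    + by rewrite /= leq_maxl.
    + by move=> z; rewrite /zlin /= !cmulz1.
  pose p := take c.+1 w; pose q := drop c.+1 w.
  have Hpq : w = p ++ q by rewrite cat_take_drop.
  have [Hp Hq] : wg g p /\ wg g q by apply/wg_cat; rewrite -Hpq.
  have szq : (size q <= n)%N by rewrite size_drop; lia.
  have Yy : List.In (f \o rho (ev op e p)) Y.
    apply/List.in_flat_map; exists f; split=> //; apply/List.in_map_iff.
    by exists p; split=> //; apply: allwP => //; rewrite size_take; case: ifP => //; lia.
  have [m0 [Hm0 [m [t [Hm Ht Heq Hcost]]]]] := HK _ Yy.
  exists m, (map (fun pr => (pr.1 \o rho (ev op e q), pr.2)) t); split=> //.
  + apply: Forall_map_seq Ht _ => pr /Hc [f' [w' [Ff' Hw' Hs' ->]]] /=.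
    exists f', (w' ++ q); split=> //; first by apply/wg_cat.
      by rewrite size_cat; lia.
    by rewrite rho_cat.
  + rewrite -map_comp /comp /=.
    apply: leq_trans Hcost _; apply: leq_trans Hm0 _; exact: leq_maxr.
  + move=> z; rewrite zlin_comp -Heq Hpq rho_cat.
    by [].
Qed.
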